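(* For generic $a$ ($a\neq1$) and $k$, define for $n\ge0$ \[ \boldsymbol{\alpha}_n(a,k,q)=\frac{(-1)^na^nq^{n(3n-1)/2}(1-aq^{2n})(a;q)_n}{(1-a)(q;q)_n},\qquad \boldsymbol{\beta}_n(a,k,q)=(k;q)_n\sum_{j=0}^n\frac{(-1)^jk^jq^{\binom j2+nj}(k/a;q)_{n-j}}{(q;q)_j(q;q)_{n-j}}. \] Then $(\boldsymbol{\alpha}_n,\boldsymbol{\beta}_n)$ is a WP-Bailey pair relative to $a$ with parameter $k$.
   Context: Notation: $(x;q)_n=\prod_{i=0}^{n-1}(1-xq^i)$. A pair of sequences $(\boldsymbol{\alpha}_n(a,k,q),\boldsymbol{\beta}_n(a,k,q))_{n\ge0}$ is a WP-Bailey pair (relative to $a$, with parameter $k$) if $\boldsymbol{\alpha}_0=1$ and for all $n\ge0$ \[\boldsymbol{\beta}_n=\sum_{j=0}^n\frac{(k/a;q)_{n-j}(k;q)_{n+j}}{(q;q)_{n-j}(aq;q)_{n+j}}\boldsymbol{\alpha}_j.\] *)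

(* Defs.v *)
(* identities of q-series as rational-function identities,
   stated over an arbitrary field with nonvanishing denominators. *)
From HB Require Import structures.
From mathcomp Require Import all_boot all_order all_algebra.
Set Implicit Arguments. Unset Strict Implicit. Unset Printing Implicit Defensive.
Import Order.TTheory GRing.Theory Num.Theory.
Local Open Scope ring_scope.

Definition qpoch (F : fieldType) (x q : F) (n : nat) : F :=
  \prod_(i < n) (1 - x * q ^+ i).

Definition WP_Bailey_pair (F : fieldType) (a k q : F)
  (alpha beta : nat -> F) : Prop :=
  alpha 0%N = 1 /\
  forall n : nat,
    beta n = \sum_(j < n.+1)
      (qpoch (k / a) q (n - j) * qpoch k q (n + j)
        / (qpoch q q (n - j) * qpoch (a * q) q (n + j))) * alpha j.

Definition alpha17 (F : fieldType) (a k q : F) (n : nat) : F :=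
  (-1) ^+ n * a ^+ n * q ^+ ((n * (3 * n - 1)) %/ 2) * (1 - a * q ^+ (2 * n))
    * qpoch a q n / ((1 - a) * qpoch q q n).

Definition beta17 (F : fieldType) (a k q : F) (n : nat) : F :=
  qpoch k q n * \sum_(j < n.+1)
    ((-1) ^+ j * k ^+ j * q ^+ ('C(j, 2) + n * j) * qpoch (k / a) q (n - j)
      / (qpoch q q j * qpoch q q (n - j))).

(* Main.v *)
Require Import Defs.
From HB Require Import structures.
From mathcomp Require Import all_boot all_order all_algebra.
From mathcomp Require Import zify ring lra.
Import GRing.Theory.
Local Open Scope ring_scope.
Set Implicit Arguments. Unset Strict Implicit.

Section S.
Variable F : fieldType.

Definition ispoly (f : F -> F) := exists p : {poly F}, forall x, f x = p.[x].

Lemma ispoly_const c : ispoly (fun _ => c).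
Proof. by exists c%:P => x; rewrite hornerC. Qed.
Lemma ispoly_id : ispoly (fun x => x).
Proof. by exists 'X => x; rewrite hornerX. Qed.
Lemma ispoly_add f g : ispoly f -> ispoly g -> ispoly (fun x => f x + g x).
Proof. by move=> [p hp] [r hr]; exists (p + r) => x; rewrite hornerD hp hr. Qed.
Lemma ispoly_mul f g : ispoly f -> ispoly g -> ispoly (fun x => f x * g x).
Proof. by move=> [p hp] [r hr]; exists (p * r) => x; rewrite hornerM hp hr. Qed.
Lemma ispoly_opp f : ispoly f -> ispoly (fun x => - f x).
Proof. by move=> [p hp]; exists (- p) => x; rewrite hornerN hp. Qed.
Lemma ispoly_exp f n : ispoly f -> ispoly (fun x => f x ^+ n).
Proof. by move=> [p hp]; exists (p ^+ n) => x; rewrite horner_exp hp. Qed.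
Lemma ispoly_sum n (G : F -> 'I_n -> F) :
  (forall j, ispoly (fun x => G x j)) -> ispoly (fun x => \sum_(j < n) G x j).
Proof.
move=> h; elim: n G h => [|n IH] G h.
  by exists 0 => x; rewrite big_ord0 horner0.
have [p hp] := IH (fun x j => G x (widen_ord (leqnSn n) j)) (fun j => h _).
have [r hr] := h ord_max.
by exists (p + r) => x; rewrite big_ord_recr /= hornerD -hp -hr.
Qed.
Lemma ispoly_prod n (G : F -> 'I_n -> F) :
  (forall j, ispoly (fun x => G x j)) -> ispoly (fun x => \prod_(j < n) G x j).
Proof.
move=> h; elim: n G h => [|n IH] G h.
  by exists 1 => x; rewrite big_ord0 hornerC.
have [p hp] := IH (fun x j => G x (widen_ord (leqnSn n) j)) (fun j => h _).
have [r hr] := h ord_max.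
by exists (p * r) => x; rewrite big_ord_recr /= hornerM -hp -hr.
Qed.

Lemma ispoly_zero f (x : nat -> F) : ispoly f -> injective x ->
  (forall i, f (x i) = 0) -> forall k, f k = 0.
Proof.
move=> [p hp] xi h0 k; rewrite hp.
have [->|pn0] := eqVneq p 0; first by rewrite horner0.
have := max_poly_roots (rs := map x (iota 0 (size p))) pn0.
rewrite size_map size_iota ltnn; move=> H; exfalso; apply: notF; apply: H.
  by apply/allP => y /mapP [i _ ->]; rewrite /root -hp h0.
by rewrite map_inj_uniq // iota_uniq.
Qed.
End S.

Ltac ispoly_tac := repeat first [ apply: ispoly_const | apply: ispoly_id
  | apply: ispoly_add | apply: ispoly_mul | apply: ispoly_opp | apply: ispoly_exp
  | (apply: ispoly_sum; intro) | (apply: ispoly_prod; intro) ].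


Lemma fieldT1 (F : fieldType) (a q k Q1 A1 K1 K2 qd qe: F) : a != 0 -> Q1 != 0 -> A1 != 0 -> 1 - q * qd != 0 -> 1 - a * q * qe != 0 ->
  k * (1 - k) * (K1 * K2 / (Q1 * A1)) =
  a *
  ((1 - k) *
   (K1 * (1 - k * q / a * qd) * (K2 * (1 - k * q * qe)) /
    (Q1 * (1 - q * qd) * (A1 * (1 - a * q * qe)))) -
   (1 - k * (q * qd * (q * qe))) *
   ((1 - k / a) * K1 * ((1 - k) * K2) /
    (Q1 * (1 - q * qd) * (A1 * (1 - a * q * qe))))).
Proof. move=> h0 h1 h2 h3 h4. field. by rewrite h0 h1 h2 h3 h4. Qed.

Lemma linL (F : fieldType) (a k Z Q P P0 P1 SA SB SC B C H : F) :
  (1 - k) * P0 = P -> (1 - k) * P1 = P * (1 - k * Z) ->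
  a * ((1 - k * Z) * SB - (1 - k * Q) * SC) = k * SA + a * H ->
  a * ((1 - k * Z) * B - (1 - k * Q) * C) = - (a * H) ->
  k * (1 - k) * (P0 * SA) = a * ((1 - k) * (P1 * (SB + B)) - (1 - k * Q) * (P * (SC + C))).
Proof.
move=> e1 e2 h1 h2.
transitivity (k * ((1 - k) * P0) * SA); first by ring.
transitivity (a * (((1 - k) * P1) * (SB + B)) - a * ((1 - k * Q) * (P * (SC + C)))); last by ring.
rewrite e1 e2.
transitivity (P * (a * ((1 - k * Z) * SB - (1 - k * Q) * SC) + a * ((1 - k * Z) * B - (1 - k * Q) * C))); last by ring.
rewrite h1 h2; ring.
Qed.

Section R.
Variables (F : fieldType) (a q : F).
Hypotheses (ha0 : a != 0) (ha1 : a != 1)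
  (hq : forall m : nat, qpoch q q m != 0)
  (haq : forall m : nat, qpoch (a * q) q m != 0).

Lemma qpoch0 x : qpoch x q 0 = 1.
Proof. by rewrite /qpoch big_ord0. Qed.
Lemma qpochS_r x n : qpoch x q n.+1 = qpoch x q n * (1 - x * q ^+ n).
Proof. by rewrite /qpoch big_ord_recr. Qed.
Lemma qpochS_l x n : qpoch x q n.+1 = (1 - x) * qpoch (x * q) q n.
Proof.
rewrite /qpoch big_ord_recl expr0 mulr1; congr (_ * _); apply: eq_bigr => i _.
by rewrite /= exprS mulrA.
Qed.
Lemma nz_q n : 1 - q * q ^+ n != 0.
Proof. by have := hq n.+1; rewrite qpochS_r mulf_eq0 negb_or => /andP[]. Qed.
Lemma nz_aq n : 1 - a * q * q ^+ n != 0.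
Proof. by have := haq n.+1; rewrite qpochS_r mulf_eq0 negb_or => /andP[]. Qed.

Definition cc x n j := qpoch (x / a) q (n - j) * qpoch x q (n + j)
        / (qpoch q q (n - j) * qpoch (a * q) q (n + j)).

Lemma T1 (k : F) m j : (j <= m)%N ->
  k * (1 - k) * cc (k * q) m j =
  a * ((1 - k) * cc (k * q) m.+1 j - (1 - k * q ^+ (m.+1 + m.+1)) * cc k m.+1 j).
Proof.
move=> hj; rewrite /cc subSn // addSn.
have -> : (m.+1 + m.+1 = (m - j).+1 + (m + j).+1)%N by lia.
set d := (m - j)%N; set e := (m + j)%N.
rewrite (qpochS_l (k/a)) (qpochS_l k) (qpochS_r (k*q/a)) (qpochS_r (k*q)) (qpochS_r q d) (qpochS_r (a*q) e) exprD (mulrAC k a^-1 q).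
have h1 := hq d; have h2 := haq e; have h3 := nz_q d; have h4 := nz_aq e.
move: h1 h2 h3 h4.
set Q1 := qpoch q q d; set A1 := qpoch (a*q) q e; set K1 := qpoch (k*q/a) q d;
 set K2 := qpoch (k*q) q e; set qd := q ^+ d; set qe := q ^+ e.
move=> h1 h2 h3 h4. rewrite -/qd -/qe. rewrite !exprS -/qd -/qe. exact: fieldT1.
Qed.
Lemma T2 (k : F) m :
  (1 - k) * cc (k * q) m.+1 m.+1 = (1 - k * q ^+ (m.+1 + m.+1)) * cc k m.+1 m.+1.
Proof.
rewrite /cc subnn !qpoch0 !mul1r.
have h := haq (m.+1 + m.+1).
rewrite mulrA -qpochS_l qpochS_r; field.
by rewrite h.
Qed.

Definition al j := alpha17 a 0 q j.
Definition RR n (x : F) := \sum_(j < n.+1) cc x n j * al j.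

Lemma ER (k : F) m :
  k * (1 - k) * RR m (k * q) =
  a * ((1 - k) * RR m.+1 (k * q) - (1 - k * q ^+ (m.+1 + m.+1)) * RR m.+1 k).
Proof.
rewrite /RR (big_ord_recr m.+1) /= (big_ord_recr m.+1 (fun j => cc k _ _ * _)) /=.
have E : forall j : 'I_m.+1, k * (1 - k) * (cc (k * q) m j * al j) =
   a * ((1 - k) * (cc (k * q) m.+1 j * al j)) -
   a * ((1 - k * q ^+ (m.+1 + m.+1)) * (cc k m.+1 j * al j)).
  move=> j; rewrite mulrA T1; first by ring.
  by rewrite -ltnS ltn_ord.
rewrite mulr_sumr (eq_bigr _ (fun j _ => E j)) sumrB -!mulr_sumr.
rewrite !mulrDr (mulrA (1 - k)) T2 -mulrA mulrN mulrDr opprD addrA.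
by rewrite (addrAC (a * _)) addrK.
Qed.
Definition bt (x : F) n j := (-1) ^+ j * x ^+ j * q ^+ ('C(j, 2) + n * j) * qpoch (x / a) q (n - j)
      / (qpoch q q j * qpoch q q (n - j)).

Lemma beta_bt x n : beta17 a x q n = qpoch x q n * \sum_(j < n.+1) bt x n j.
Proof. by []. Qed.

Definition HH (k : F) m j := (1 - q ^+ j) * (-1) ^+ j * k ^+ j * q ^+ ('C(j, 2) + m.+1 * j)
   * qpoch (k * q / a) q (m.+1 - j) / (qpoch q q j * qpoch q q (m.+1 - j)).

Lemma L1 (k : F) m j : (j <= m)%N ->
  a * ((1 - k * q ^+ m.+1) * bt (k * q) m.+1 j - (1 - k * q ^+ (m.+1 + m.+1)) * bt k m.+1 j)
  = k * bt (k * q) m j + a * (HH k m j.+1 - HH k m j).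
Proof.
move=> hj; have [d ->] : exists d, m = (j + d)%N by exists (m - j)%N; lia.
rewrite /bt /HH subSn ?leq_addr // subSS addKn.
have e1 : ('C(j, 2) + (j + d).+1 * j = ('C(j, 2) + (j + d) * j) + j)%N by rewrite mulSn; lia.
have e2 : ('C(j.+1, 2) + (j + d).+1 * j.+1 = ('C(j, 2) + (j + d) * j) + j + j + (j + d).+1)%N.
  by rewrite binS bin1 mulSn !mulnS; lia.
rewrite e1 e2.
rewrite (qpochS_l (k/a)) (qpochS_r (k*q/a)) (qpochS_r q d) (qpochS_r q j) (mulrAC k a^-1 q).
rewrite !exprD exprMn !exprS !exprD.
have h1 := hq d; have h2 := hq j; have h3 := nz_q d; have h4 := nz_q j.
move: h1 h2 h3 h4.
move: (qpoch q q d) (qpoch q q j) (qpoch (k * q / a) q d) (q ^+ d) (q ^+ j)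
  (q ^+ 'C(j, 2)) (q ^+ ((j + d) * j)) ((-1) ^+ j : F) (k ^+ j) => Qd Pj Kd qd qj E1 E2 s kj.
move=> h1 h2 h3 h4; field.
by rewrite h1 h2 h3 h4 ha0.
Qed.
Lemma L2 (k : F) m :
  a * ((1 - k * q ^+ m.+1) * bt (k * q) m.+1 m.+1 - (1 - k * q ^+ (m.+1 + m.+1)) * bt k m.+1 m.+1)
  = - (a * HH k m m.+1).
Proof.
rewrite /bt /HH subnn !qpoch0 exprMn !exprD.
have h1 := hq m.+1; move: h1.
move: (qpoch q q m.+1) (q ^+ m.+1) (q ^+ 'C(m.+1, 2)) (q ^+ (m.+1 * m.+1)) ((-1) ^+ m.+1 : F) (k ^+ m.+1)
  => P Z E1 E2 s kj h1.
field. by rewrite h1.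
Qed.

Lemma HH0 (k : F) m : HH k m 0 = 0.
Proof. by rewrite /HH expr0 subrr !mul0r. Qed.

Lemma EL (k : F) m :
  k * (1 - k) * beta17 a (k * q) q m =
  a * ((1 - k) * beta17 a (k * q) q m.+1 - (1 - k * q ^+ (m.+1 + m.+1)) * beta17 a k q m.+1).
Proof.
rewrite !beta_bt.
rewrite (big_ord_recr m.+1 (fun j => bt (k * q) _ _)) (big_ord_recr m.+1 (fun j => bt k _ _)) /=.
have S : a * ((1 - k * q ^+ m.+1) * \sum_(i < m.+1) bt (k * q) m.+1 i
     - (1 - k * q ^+ (m.+1 + m.+1)) * \sum_(i < m.+1) bt k m.+1 i) =
   k * \sum_(i < m.+1) bt (k * q) m i + a * (HH k m m.+1).
  rewrite !mulr_sumr -sumrB mulr_sumr.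
  rewrite (eq_bigr (fun i : 'I_m.+1 => k * bt (k * q) m i + a * (HH k m i.+1 - HH k m i))); last first.
    by move=> i _; rewrite L1 // -ltnS ltn_ord.
  rewrite big_split /= -mulr_sumr -mulr_sumr.
  have -> : \sum_(i < m.+1) (HH k m i.+1 - HH k m i) = HH k m m.+1 - HH k m 0.
    by rewrite -(big_mkord (fun _ => true) (fun i => HH k m i.+1 - HH k m i)) telescope_sumr.
  by rewrite HH0 subr0.
have L := L2 k m.
apply: linL S L; first by rewrite qpochS_l.
by rewrite -qpochS_l qpochS_r.
Qed.
Lemma expo n : ((n * (3 * n - 1)) %/ 2 = 'C(n, 2) + n * n)%N.
Proof.
have h : (2 * 'C(n, 2) = n * (n - 1))%N.
  elim: n => // n IH; rewrite binS bin1 mulnDr IH; case: n {IH} => // n; nia.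
have -> : (n * (3 * n - 1) = 2 * ('C(n, 2) + n * n))%N by rewrite mulnDr h; case: n {h} => // n; nia.
by rewrite mulKn.
Qed.

Lemma nz1a : 1 - a != 0.
Proof. by rewrite subr_eq0 eq_sym. Qed.

Lemma nz_ai i : 1 - a * q ^+ i != 0.
Proof. case: i => [|i]; first by rewrite expr0 mulr1 nz1a. by rewrite exprS mulrA nz_aq. Qed.

Lemma qpoch1 n : qpoch (a / a) q n.+1 = 0.
Proof. by rewrite qpochS_l divff // subrr mul0r. Qed.

Lemma VL n : beta17 a a q n = (-1) ^+ n * a ^+ n * q ^+ ('C(n, 2) + n * n) * qpoch a q n / qpoch q q n.
Proof.
rewrite beta_bt big_ord_recr /= big1 ?add0r; last first.
  move=> j _; rewrite /bt /=.
  have -> : (n - j = (n - j).-1.+1)%N by rewrite prednK // subn_gt0.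
  by rewrite qpoch1 !mulr0 mul0r.
rewrite /bt subnn !qpoch0 mulr1 mulr1; have := hq n; move: (qpoch q q n) => P hP.
by field.
Qed.

Lemma VR n : RR n a = (-1) ^+ n * a ^+ n * q ^+ ('C(n, 2) + n * n) * qpoch a q n / qpoch q q n.
Proof.
rewrite /RR big_ord_recr /= big1 ?add0r; last first.
  move=> j _; rewrite /cc /=.
  have -> : (n - j = (n - j).-1.+1)%N by rewrite prednK // subn_gt0.
  by rewrite qpoch1 !mul0r.
rewrite /cc /al /alpha17 subnn !qpoch0 !mul1r expo mul2n -addnn.
have e : qpoch a q (n + n) * (1 - a * q ^+ (n + n)) = (1 - a) * qpoch (a * q) q (n + n).
  by rewrite -qpochS_r qpochS_l.
have := hq n; have := haq (n + n); have := nz1a; have := nz_ai (n + n).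
move: e; move: (qpoch a q (n + n)) (qpoch (a * q) q (n + n)) (qpoch q q n) (1 - a * q ^+ (n + n)) (1 - a)
  => A B P X Y e h1 h2 h3 h4.
have -> : A = Y * B / X by rewrite -e; field.
field. by rewrite h1 h2 h3 h4.
Qed.

End R.

Lemma alpha0 (F : fieldType) (a k q : F) : a != 1 -> alpha17 a k q 0 = 1.
Proof.
move=> ha1; rewrite /alpha17 /qpoch !big_ord0 !expr0 !mulr1 !mul1r.
by rewrite divff // subr_eq0 eq_sym.
Qed.

Theorem mainTheorem17 (F : fieldType) (a k q : F)
  (ha0 : a != 0) (ha1 : a != 1)
  (hq : forall m : nat, qpoch q q m != 0)
  (haq : forall m : nat, qpoch (a * q) q m != 0) :
  WP_Bailey_pair a k q (alpha17 a k q) (beta17 a k q).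
Proof.
split; first exact: alpha0.
suff H : forall n (x : F), beta17 a x q n = RR a q n x.
  by move=> n; rewrite H.
elim=> [|n IH] x.
  rewrite beta_bt /RR /cc /al !big_ord1 /bt /= !qpoch0 alpha0 //.
  by rewrite !expr0 !mul1r !mulr1 invr1.
pose D y := beta17 a y q n.+1 - RR a q n.+1 y.
suff : forall y, D y = 0 by move=> /(_ x) /eqP; rewrite subr_eq0 => /eqP.
have rel : forall y, (1 - y) * D (y * q) = (1 - y * q ^+ (n.+1 + n.+1)) * D y.
  move=> y; apply/eqP; rewrite -subr_eq0 -(mulrI_eq0 _ (lregP ha0)).
  rewrite /D !mulrBr.
  have e1 := EL ha0 ha1 hq y n; have e2 := ER ha0 ha1 hq haq y n; rewrite IH in e1.
  rewrite -[X in X == 0]/(_) .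
  apply/eqP.
  transitivity (a * ((1 - y) * beta17 a (y * q) q n.+1 - (1 - y * q ^+ (n.+1 + n.+1)) * beta17 a y q n.+1)
    - a * ((1 - y) * RR a q n.+1 (y * q) - (1 - y * q ^+ (n.+1 + n.+1)) * RR a q n.+1 y)); first by ring.
  by rewrite -e1 -e2 subrr.
have Da : D a = 0 by rewrite /D (VL ha0 hq) (VR ha0 ha1 hq haq) subrr.
have [q0|qn0] := eqVneq q 0.
  move=> y; move: (rel y) (rel a); rewrite q0 !mulr0 expr0n /= !mulr0 !subr0 !mul1r Da.
  move=> <-; move/eqP; rewrite mulf_eq0 (negbTE (nz1a ha1)) /= => /eqP ->.
  by rewrite mulr0.
apply: (ispoly_zero (x := fun i => a * q ^+ i)).
- rewrite /D /beta17 /RR /cc /al /alpha17 /qpoch; ispoly_tac.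
- have key : forall i d, a * q ^+ i != a * q ^+ (i + d.+1).
    move=> i d; rewrite exprD mulrA -{1}(mulr1 (a * q ^+ i)) (inj_eq (mulfI _)); last first.
      by rewrite mulf_neq0 // expf_neq0.
    by rewrite exprS; have := nz_q hq d; rewrite subr_eq0 eq_sym.
  move=> i j /eqP e; apply/eqP; case: (ltngtP i j) => [h|h|//].
    have ej : j = (i + (j - i.+1).+1)%N by lia.
    by move: e; rewrite ej (negbTE (key _ _)).
  have ei : i = (j + (i - j.+1).+1)%N by lia.
  by move: e; rewrite eq_sym ei (negbTE (key _ _)).
- elim=> [|i IHi]; first by rewrite expr0 mulr1.
  have := rel (a * q ^+ i); rewrite IHi mulr0 -mulrA -exprSr.
  by move/eqP; rewrite mulf_eq0 (negbTE (nz_ai ha1 haq i)) /= => /eqP.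
Qed.
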